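(* Let $(X,d)$ be a complete separable metric space without isolated points and let $f\colon X\to X$ be a continuous map. Then the following are equivalent: (1) for each $k\geq 2$, $\mathrm{Prox}_k(f)$ is dense in $X^k$; (2) there exist a sequence $\{p_n\}$ in $\mathbb{N}$ and a dense $\sigma$-Cantor subset $S$ of $X$ such that for any $x,y\in S$, $\lim_{n\to\infty} d(f^{p_n}(x),f^{p_n}(y))=0$.
   Context: For $k\geq 2$, $\mathrm{Prox}_k(f)=\{(x_1,\dots,x_k)\in X^k: \liminf_{n\to\infty}\max_{1\leq i<j\leq k} d(f^n(x_i),f^n(x_j))=0\}$. A $\sigma$-Cantor set is a countable union of sets each homeomorphic to the Cantor ternary set. *)

(* Defs.v *)
From Stdlib Require Import Reals.
Open Scope R_scope.

Definition is_metric {X : Type} (d : X -> X -> R) : Prop :=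
  (forall x y, 0 <= d x y) /\
  (forall x y, d x y = 0 <-> x = y) /\
  (forall x y, d x y = d y x) /\
  (forall x y z, d x z <= d x y + d y z).

Definition cauchy_seq {X : Type} (d : X -> X -> R) (u : nat -> X) : Prop :=
  forall eps, 0 < eps -> exists N, forall m n, (N <= m)%nat -> (N <= n)%nat -> d (u m) (u n) < eps.

Definition converges_to {X : Type} (d : X -> X -> R) (u : nat -> X) (l : X) : Prop :=
  forall eps, 0 < eps -> exists N, forall n, (N <= n)%nat -> d (u n) l < eps.

Definition complete_metric {X : Type} (d : X -> X -> R) : Prop :=
  forall u, cauchy_seq d u -> exists l, converges_to d u l.

Definition dense_in {X : Type} (d : X -> X -> R) (D : X -> Prop) : Prop :=
  forall x eps, 0 < eps -> exists y, D y /\ d x y < eps.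

Definition countable_set {X : Type} (D : X -> Prop) : Prop :=
  exists h : X -> nat, forall x y, D x -> D y -> h x = h y -> x = y.

Definition separable_metric {X : Type} (d : X -> X -> R) : Prop :=
  exists D : X -> Prop, countable_set D /\ dense_in d D.

Definition no_isolated_points {X : Type} (d : X -> X -> R) : Prop :=
  forall x eps, 0 < eps -> exists y, y <> x /\ d x y < eps.

Definition continuous_map {X Y : Type} (dX : X -> X -> R) (dY : Y -> Y -> R)
  (f : X -> Y) : Prop :=
  forall x eps, 0 < eps -> exists delta, 0 < delta /\
    forall y, dX x y < delta -> dY (f x) (f y) < eps.

Definition iter {X : Type} (n : nat) (f : X -> X) (x : X) : X := Nat.iter n f x.

(** Prox_k(f): a k-tuple is represented by t : nat -> X (only indices < k matter).
    liminf_n max_{i<j<k} d(f^n t_i, f^n t_j) = 0, written out (the quantity is >= 0):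
    for every eps > 0 and N there is n >= N with all pairwise distances < eps. *)
Definition Prox {X : Type} (d : X -> X -> R) (f : X -> X) (k : nat) (t : nat -> X) : Prop :=
  forall eps, 0 < eps -> forall N, exists n, (N <= n)%nat /\
    forall i j, (i < j)%nat -> (j < k)%nat -> d (iter n f (t i)) (iter n f (t j)) < eps.

(** Density in X^k with the product topology (max metric on k-tuples). *)
Definition dense_in_power {X : Type} (d : X -> X -> R) (k : nat) (P : (nat -> X) -> Prop) : Prop :=
  forall (y : nat -> X) eps, 0 < eps ->
    exists t, P t /\ forall i, (i < k)%nat -> d (t i) (y i) < eps.

Definition cantor_ternary (c : R) : Prop :=
  exists a : nat -> bool,
    infinite_sum (fun n => (if a n then 2 else 0) / 3 ^ (S n)) c.

Definition homeomorphic_to_cantor {X : Type} (d : X -> X -> R) (A : X -> Prop) : Prop :=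
  exists g : X -> R,
    (forall x, A x -> cantor_ternary (g x)) /\
    (forall x y, A x -> A y -> g x = g y -> x = y) /\
    (forall c, cantor_ternary c -> exists x, A x /\ g x = c) /\
    (forall x eps, A x -> 0 < eps -> exists delta, 0 < delta /\
       forall y, A y -> d x y < delta -> Rabs (g y - g x) < eps) /\
    (forall x eps, A x -> 0 < eps -> exists delta, 0 < delta /\
       forall y, A y -> Rabs (g y - g x) < delta -> d x y < eps).

(** sigma-Cantor set: a countable union of sets each homeomorphic to the
    Cantor ternary set (the family is indexed by a subset P of nat, so that
    the empty family is allowed). *)
Definition sigma_cantor {X : Type} (d : X -> X -> R) (S : X -> Prop) : Prop :=
  exists (C : nat -> X -> Prop) (P : nat -> Prop),
    (forall n, P n -> homeomorphic_to_cantor d (C n)) /\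
    (forall x, S x <-> exists n, P n /\ C n x).

(* Main.v *)
Require Import Defs.
From Stdlib Require Import Reals Lra Lia ClassicalEpsilon Classical Cantor.
Open Scope R_scope.


Definition dig (a : nat -> bool) (n : nat) : R := (if a n then 2 else 0) / 3 ^ (S n).
Fixpoint ps (a : nat -> bool) (m : nat) : R :=
  match m with O => 0 | S m => ps a m + dig a m end.

Lemma ps_sum a n : sum_f_R0 (dig a) n = ps a (S n).
Proof. induction n; simpl in *; [lra | rewrite IHn; reflexivity]. Qed.

Lemma pow3_pos n : 0 < 3 ^ n.
Proof. apply pow_lt; lra. Qed.

Lemma dig_bounds a n : 0 <= dig a n <= 1/3^n - 1/3^(S n).
Proof.
  unfold dig. pose proof (pow3_pos n). simpl.
  assert (E : 1/3^n - 1/(3*3^n) = 2/(3*3^n)) by (field; lra). rewrite E.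
  destruct (a n); split; unfold Rdiv;
  try (apply Rmult_le_pos; [lra| left; apply Rinv_0_lt_compat; lra]); try lra.
  rewrite Rmult_0_l. apply Rmult_le_pos; [lra| left; apply Rinv_0_lt_compat; lra].
Qed.

Lemma ps_bound a m k : 0 <= ps a (m+k) - ps a m <= 1/3^m - 1/3^(m+k).
Proof.
  induction k.
  - rewrite Nat.add_0_r. lra.
  - rewrite Nat.add_succ_r. simpl ps. pose proof (dig_bounds a (m+k)).
    replace (3 ^ S (m+k)) with (3 ^ (S (m+k))) by reflexivity. lra.
Qed.

Lemma inv3_pos m : 0 < 1/3^m.
Proof. pose proof (pow3_pos m). unfold Rdiv; rewrite Rmult_1_l; apply Rinv_0_lt_compat; lra. Qed.

Lemma pow_ge_n (x : R) n : 2 <= x -> INR n <= x ^ n.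
Proof.
  intro Hx. induction n. simpl; lra.
  rewrite S_INR. simpl. assert (1 <= x ^ n).
  { clear IHn. induction n; simpl; nra. } nra.
Qed.

Lemma small_pow (x : R) eps : 2 <= x -> 0 < eps -> exists m, 1 / x ^ m < eps.
Proof.
  intros Hx He. destruct (archimed (/eps)) as [H1 _].
  destruct (INR_unbounded (/eps)) as [m Hm].
  exists m. pose proof (pow_ge_n x m Hx).
  assert (0 < /eps) by (apply Rinv_0_lt_compat; lra).
  assert (Hp : 0 < x ^ m) by lra.
  apply (Rmult_lt_reg_r (x^m)); auto. unfold Rdiv. rewrite Rmult_1_l, Rinv_l by lra.
  apply (Rmult_lt_reg_l (/eps)); auto. rewrite <- Rmult_assoc, Rinv_l by lra. lra.
Qed.

Lemma ps_cauchy a : Cauchy_crit (ps a).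
Proof.
  intros eps He. destruct (small_pow 3 eps) as [m Hm]; try lra.
  exists m. intros n k Hn Hk. unfold Rdist.
  destruct (ps_bound a m (n - m)) as [B1 B2].
  destruct (ps_bound a m (k - m)) as [C1 C2].
  replace (m + (n-m))%nat with n in * by lia.
  replace (m + (k-m))%nat with k in * by lia.
  pose proof (inv3_pos n). pose proof (inv3_pos k).
  apply Rabs_def1; lra.
Qed.

Definition tern (a : nat -> bool) : R := proj1_sig (R_complete (ps a) (ps_cauchy a)).

Lemma tern_cv a : Un_cv (ps a) (tern a).
Proof. unfold tern. destruct (R_complete (ps a) (ps_cauchy a)); auto. Qed.

Lemma cv_le (u : nat -> R) l c N : Un_cv u l -> (forall n, (N <= n)%nat -> u n <= c) -> l <= c.
Proof.
  intros Hu Hb. destruct (Rle_or_lt l c) as [|Hlt]; auto.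
  destruct (Hu (l - c)) as [M HM]; [lra|].
  specialize (HM (max N M) ltac:(lia)). specialize (Hb (max N M) ltac:(lia)).
  unfold Rdist in HM. apply Rabs_def2 in HM. lra.
Qed.

Lemma cv_ge (u : nat -> R) l c N : Un_cv u l -> (forall n, (N <= n)%nat -> c <= u n) -> c <= l.
Proof.
  intros Hu Hb. destruct (Rle_or_lt c l) as [|Hlt]; auto.
  destruct (Hu (c - l)) as [M HM]; [lra|].
  specialize (HM (max N M) ltac:(lia)). specialize (Hb (max N M) ltac:(lia)).
  unfold Rdist in HM. apply Rabs_def2 in HM. lra.
Qed.

Lemma tern_bounds a m : ps a m <= tern a <= ps a m + 1/3^m.
Proof.
  split.
  - apply (cv_ge _ _ _ m (tern_cv a)). intros n Hn.
    destruct (ps_bound a m (n-m)) as [B _]. replace (m + (n-m))%nat with n in B by lia. lra.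
  - apply (cv_le _ _ _ m (tern_cv a)). intros n Hn.
    destruct (ps_bound a m (n-m)) as [_ B]. replace (m + (n-m))%nat with n in B by lia.
    pose proof (inv3_pos n). lra.
Qed.

Lemma ps_agree a b m : (forall i, (i < m)%nat -> a i = b i) -> ps a m = ps b m.
Proof.
  induction m; intros H; simpl; auto.
  rewrite IHm by (intros; apply H; lia). unfold dig. rewrite H by lia. reflexivity.
Qed.

Lemma tern_close a b m : (forall i, (i < m)%nat -> a i = b i) -> Rabs (tern a - tern b) <= 1/3^m.
Proof.
  intros H. pose proof (ps_agree a b m H). pose proof (tern_bounds a m). pose proof (tern_bounds b m).
  apply Rabs_le; lra.
Qed.

Lemma inv3_mono i m : (i <= m)%nat -> 1/3^m <= 1/3^i.
Proof.
  intros H. unfold Rdiv. rewrite !Rmult_1_l. apply Rinv_le_contravar. apply pow3_pos.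
  apply Rle_pow; lra || lia.
Qed.

Lemma tern_sep a b m : Rabs (tern a - tern b) < 1/3^m -> forall i, (i < m)%nat -> a i = b i.
Proof.
  intros H. induction i using (well_founded_induction Wf_nat.lt_wf). intros Him.
  destruct (Bool.bool_dec (a i) (b i)) as [|Hne]; auto. exfalso.
  assert (Hag : forall k, (k < i)%nat -> a k = b k) by (intros; apply H0; lia).
  pose proof (ps_agree a b i Hag) as Hps.
  pose proof (tern_bounds a (S i)). pose proof (tern_bounds b (S i)).
  pose proof (inv3_mono (S i) m Him).
  simpl ps in *. unfold dig in *.
  assert (E : 2 / 3 ^ S i = 2 * (1 / 3 ^ S i)) by (unfold Rdiv; ring).
  assert (E0 : 0 / 3 ^ S i = 0) by (unfold Rdiv; ring).
  destruct (a i), (b i); try congruence; rewrite ?E, ?E0 in *;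
  apply Rabs_def2 in H; lra.
Qed.

Lemma tern_sum a : infinite_sum (dig a) (tern a).
Proof.
  intros eps He. destruct (tern_cv a eps He) as [N HN].
  exists N. intros n Hn. rewrite ps_sum. apply HN. lia.
Qed.

Lemma tern_cantor a : cantor_ternary (tern a).
Proof. exists a. exact (tern_sum a). Qed.

Lemma cantor_tern c : cantor_ternary c -> exists a, c = tern a.
Proof.
  intros [a Ha]. exists a. apply (uniqueness_sum (dig a)); auto.
  exact (tern_sum a).
Qed.


Lemma d_nn {X} (d : X -> X -> R) : is_metric d -> forall x y, 0 <= d x y.
Proof. intros [H _]; auto. Qed.
Lemma d_xx {X} (d : X -> X -> R) : is_metric d -> forall x, d x x = 0.
Proof. intros [_ [H _]] x; apply H; auto. Qed.
Lemma d_eq {X} (d : X -> X -> R) : is_metric d -> forall x y, d x y = 0 -> x = y.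
Proof. intros [_ [H _]] x y; apply H; auto. Qed.
Lemma d_sym {X} (d : X -> X -> R) : is_metric d -> forall x y, d x y = d y x.
Proof. intros [_ [_ [H _]]]; auto. Qed.
Lemma d_tri {X} (d : X -> X -> R) : is_metric d -> forall x y z, d x z <= d x y + d y z.
Proof. intros [_ [_ [_ H]]]; auto. Qed.

Lemma lim_unique {X} (d : X -> X -> R) (u : nat -> X) l1 l2 : is_metric d ->
  converges_to d u l1 -> converges_to d u l2 -> l1 = l2.
Proof.
  intros Hm H1 H2. apply (d_eq d Hm).
  destruct (Rle_or_lt (d l1 l2) 0) as [|Hlt]. pose proof (d_nn d Hm l1 l2); lra.
  exfalso. destruct (H1 (d l1 l2 / 2)) as [N1 HN1]; [lra|].
  destruct (H2 (d l1 l2 / 2)) as [N2 HN2]; [lra|].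
  specialize (HN1 (max N1 N2) ltac:(lia)). specialize (HN2 (max N1 N2) ltac:(lia)).
  pose proof (d_tri d Hm l1 (u (max N1 N2)) l2). rewrite (d_sym d Hm l1 (u (max N1 N2))) in H. lra.
Qed.

Lemma fin_min (k : nat) (P : nat -> R -> Prop) :
  (forall i r r', P i r -> 0 < r' -> r' <= r -> P i r') ->
  (forall i, (i < k)%nat -> exists r, 0 < r /\ P i r) ->
  exists r, 0 < r /\ forall i, (i < k)%nat -> P i r.
Proof.
  intros Hd. induction k; intros H.
  - exists 1. split; [lra| intros; lia].
  - destruct IHk as [r1 [Hr1 H1]]. intros; apply H; lia.
    destruct (H k ltac:(lia)) as [r2 [Hr2 H2]].
    exists (Rmin r1 r2). split. apply Rmin_pos; auto.
    intros i Hi. destruct (Nat.eq_dec i k) as [->|Hne].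
    + apply (Hd k r2); auto. apply Rmin_pos; auto. apply Rmin_r.
    + apply (Hd i r1); auto. apply H1; lia. apply Rmin_pos; auto. apply Rmin_l.
Qed.

Lemma iter_S {X} n (f : X -> X) x : iter (S n) f x = f (iter n f x).
Proof. reflexivity. Qed.

Lemma iter_cont {X} (d : X -> X -> R) f n : continuous_map d d f -> continuous_map d d (iter n f).
Proof.
  intros Hf. induction n.
  - intros x eps He. exists eps. split; auto.
  - intros x eps He. destruct (Hf (iter n f x) eps He) as [d1 [Hd1 H1]].
    destruct (IHn x d1 Hd1) as [d2 [Hd2 H2]].
    exists d2. split; auto. intros y Hy. rewrite !iter_S. apply H1, H2, Hy.
Qed.

Lemma iter_add {X} n m (f : X -> X) x : iter (n + m) f x = iter n f (iter m f x).
Proof. induction n; simpl; auto. change (f (iter (n + m) f x) = f (iter n f (iter m f x))). rewrite IHn. reflexivity. Qed.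


Definition Good {X} (d : X -> X -> R) (f : X -> X) (n : nat)
  (c : nat -> nat -> X) (r : nat -> nat -> R) (p : nat)
  (c' : nat -> nat -> X) (r' : nat -> nat -> R) : Prop :=
 (forall j v, d (c' j v) (c j (Nat.div2 v)) + r' j v <= r j (Nat.div2 v)) /\
 (forall j v, r' j v <= r j (Nat.div2 v) / 2) /\
 (forall j w, 2 * r' j (2*w)%nat + 2 * r' j (S (2*w)) < d (c' j (2*w)%nat) (c' j (S (2*w)))) /\
 (forall j j' w w', (j <= S n)%nat -> (j' <= S n)%nat -> (w < 2^(S n))%nat -> (w' < 2^(S n))%nat ->
    forall x y, d (c' j w) x <= r' j w -> d (c' j' w') y <= r' j' w' ->
    d (iter p f x) (iter p f y) < 1 / INR (S n)).

Definition Scheme {X} (d : X -> X -> R) (f : X -> X) (cen : nat -> nat -> nat -> X)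
  (rad : nat -> nat -> nat -> R) (p : nat -> nat) : Prop :=
  (forall n, Good d f n (cen n) (rad n) (p n) (cen (S n)) (rad (S n))) /\
  (forall n j w, 0 < rad n j w) /\ (forall j w, rad 0%nat j w <= 1).

Fixpoint prefx (a : nat -> bool) (n : nat) : nat :=
  match n with O => O | S n => if a n then S (2 * prefx a n) else (2 * prefx a n)%nat end.

Lemma prefx_div2 a n : Nat.div2 (prefx a (S n)) = prefx a n.
Proof. simpl. destruct (a n). apply Nat.div2_succ_double. apply Nat.div2_double. Qed.

Lemma prefx_lt a n : (prefx a n < 2 ^ n)%nat.
Proof. induction n; simpl; [lia|]. destruct (a n); lia. Qed.

Lemma prefx_ext a b n : (forall i, (i < n)%nat -> a i = b i) -> prefx a n = prefx b n.
Proof. induction n; intros H; simpl; auto. rewrite IHn by (intros; apply H; lia). rewrite (H n) by lia. reflexivity. Qed.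


Lemma rad_le {X} (d : X -> X -> R) f cen rad p : Scheme d f cen rad p ->
  forall n j w, rad n j w <= 1 / 2 ^ n.
Proof.
  intros [HG [Hpos H0]] n. induction n; intros j w.
  - simpl. specialize (H0 j w). lra.
  - destruct (HG n) as [_ [G2 _]]. specialize (G2 j w). specialize (IHn j (Nat.div2 w)).
    simpl. pose proof (pow_lt 2 n ltac:(lra)).
    assert (1 / (2 * 2 ^ n) = (1 / 2 ^ n) / 2) by (field; lra). lra.
Qed.

Lemma nest {X} (d : X -> X -> R) f cen rad p : is_metric d -> Scheme d f cen rad p ->
  forall a j n k, d (cen (n+k)%nat j (prefx a (n+k))) (cen n j (prefx a n)) + rad (n+k)%nat j (prefx a (n+k)) <= rad n j (prefx a n).
Proof.
  intros Hm [HG [Hpos H0]] a j n k. induction k.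
  - rewrite Nat.add_0_r, (d_xx d Hm). lra.
  - rewrite Nat.add_succ_r. destruct (HG (n+k)%nat) as [G1 _].
    specialize (G1 j (prefx a (S (n+k)))). rewrite prefx_div2 in G1.
    pose proof (d_tri d Hm (cen (S (n+k)) j (prefx a (S (n+k)))) (cen (n+k)%nat j (prefx a (n+k))) (cen n j (prefx a n))).
    lra.
Qed.

Lemma rad_dec {X} (d : X -> X -> R) f cen rad p : is_metric d -> Scheme d f cen rad p ->
  forall a j n m, (n <= m)%nat -> rad m j (prefx a m) <= rad n j (prefx a n).
Proof.
  intros Hm HS a j n m H. replace m with (n + (m - n))%nat by lia.
  pose proof (nest d f cen rad p Hm HS a j n (m - n)).
  pose proof (d_nn d Hm (cen (n + (m - n))%nat j (prefx a (n + (m - n)))) (cen n j (prefx a n))). lra.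
Qed.

Lemma scheme_cauchy {X} (d : X -> X -> R) f cen rad p : is_metric d -> Scheme d f cen rad p ->
  forall a j, cauchy_seq d (fun n => cen n j (prefx a n)).
Proof.
  intros Hm HS a j eps He. destruct (small_pow 2 (eps/2)) as [N HN]; try lra.
  exists N. intros m k Hmn Hk.
  pose proof (nest d f cen rad p Hm HS a j N (m - N)).
  pose proof (nest d f cen rad p Hm HS a j N (k - N)).
  replace (N + (m - N))%nat with m in * by lia.
  replace (N + (k - N))%nat with k in * by lia.
  pose proof (rad_le d f cen rad p HS N j (prefx a N)).
  destruct HS as [_ [Hpos _]]. pose proof (Hpos m j (prefx a m)). pose proof (Hpos k j (prefx a k)).
  pose proof (d_tri d Hm (cen m j (prefx a m)) (cen N j (prefx a N)) (cen k j (prefx a k))) as Ht.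
  rewrite (d_sym d Hm (cen N j (prefx a N))) in Ht. lra.
Qed.

Definition pt {X} (d : X -> X -> R) (cen : nat -> nat -> nat -> X) (j : nat) (a : nat -> bool) : X :=
  epsilon (inhabits (cen 0%nat j 0%nat)) (fun l => converges_to d (fun n => cen n j (prefx a n)) l).

Lemma pt_cv {X} (d : X -> X -> R) f cen rad p : is_metric d -> complete_metric d -> Scheme d f cen rad p ->
  forall j a, converges_to d (fun n => cen n j (prefx a n)) (pt d cen j a).
Proof.
  intros Hm Hc HS j a. unfold pt. apply epsilon_spec. apply Hc.
  exact (scheme_cauchy d f cen rad p Hm HS a j).
Qed.

Lemma pt_in {X} (d : X -> X -> R) f cen rad p : is_metric d -> complete_metric d -> Scheme d f cen rad p ->
  forall j a n, d (cen n j (prefx a n)) (pt d cen j a) <= rad n j (prefx a n).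
Proof.
  intros Hm Hc HS j a n.
  destruct (Rle_or_lt (d (cen n j (prefx a n)) (pt d cen j a)) (rad n j (prefx a n))) as [|Hlt]; auto.
  exfalso. destruct (pt_cv d f cen rad p Hm Hc HS j a _ (proj2 (Rlt_0_minus _ _) Hlt)) as [N HN].
  specialize (HN (n + N)%nat ltac:(lia)). simpl in HN.
  pose proof (nest d f cen rad p Hm HS a j n N).
  destruct HS as [_ [Hpos _]]. pose proof (Hpos (n+N)%nat j (prefx a (n+N))).
  pose proof (d_tri d Hm (cen n j (prefx a n)) (cen (n+N)%nat j (prefx a (n+N))) (pt d cen j a)) as Ht.
  rewrite (d_sym d Hm (cen n j (prefx a n)) (cen (n+N)%nat j (prefx a (n+N)))) in Ht. lra.
Qed.

Lemma pt_ext {X} (d : X -> X -> R) f cen rad p : is_metric d -> complete_metric d -> Scheme d f cen rad p ->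
  forall j a b, (forall i, a i = b i) -> pt d cen j a = pt d cen j b.
Proof.
  intros Hm Hc HS j a b H. apply (lim_unique d (fun n => cen n j (prefx a n))); auto.
  apply (pt_cv d f cen rad p Hm Hc HS).
  intros eps He. destruct (pt_cv d f cen rad p Hm Hc HS j b eps He) as [N HN].
  exists N. intros n Hn. rewrite (prefx_ext a b n) by auto. apply HN; auto.
Qed.

Lemma branch_sep {X} (d : X -> X -> R) f cen rad p : is_metric d -> complete_metric d -> Scheme d f cen rad p ->
  forall j a b m, prefx a m = prefx b m -> a m <> b m ->
  rad (S m) j (prefx a (S m)) < d (pt d cen j a) (pt d cen j b).
Proof.
  intros Hm Hc HS j a b m Hpre Hne.
  pose proof (pt_in d f cen rad p Hm Hc HS j a (S m)) as Ia.
  pose proof (pt_in d f cen rad p Hm Hc HS j b (S m)) as Ib.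
  destruct HS as [HG [Hpos _]]. destruct (HG m) as [_ [_ [G3 _]]].
  specialize (G3 j (prefx a m)).
  pose proof (Hpos (S m) j (prefx a (S m))). pose proof (Hpos (S m) j (prefx b (S m))).
  assert (Hd : forall u v x y, d u v <= d u x + d x y + d y v).
  { intros. pose proof (d_tri d Hm u x v). pose proof (d_tri d Hm x y v). lra. }
  assert (Ea : prefx a (S m) = if a m then S (2 * prefx a m) else (2 * prefx a m)%nat) by reflexivity.
  assert (Eb : prefx b (S m) = if b m then S (2 * prefx a m) else (2 * prefx a m)%nat) by (rewrite Hpre; reflexivity).
  rewrite Ea in *. rewrite Eb in *.
  pose proof (d_sym d Hm (cen (S m) j (2 * prefx a m)%nat) (cen (S m) j (S (2 * prefx a m)))).
  destruct (a m), (b m); try congruence.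
  - pose proof (Hd (cen (S m) j (S (2 * prefx a m))) (cen (S m) j (2 * prefx a m)%nat) (pt d cen j a) (pt d cen j b)) as Ht.
    rewrite (d_sym d Hm (pt d cen j b)) in Ht. lra.
  - pose proof (Hd (cen (S m) j (2 * prefx a m)%nat) (cen (S m) j (S (2 * prefx a m))) (pt d cen j a) (pt d cen j b)) as Ht.
    rewrite (d_sym d Hm (pt d cen j b)) in Ht. lra.
Qed.

Lemma far_agree {X} (d : X -> X -> R) f cen rad p : is_metric d -> complete_metric d -> Scheme d f cen rad p ->
  forall j a b m, d (pt d cen j a) (pt d cen j b) < rad m j (prefx a m) -> forall i, (i < m)%nat -> a i = b i.
Proof.
  intros Hm Hc HS j a b m H i. induction i using (well_founded_induction Wf_nat.lt_wf). intros Him.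
  destruct (Bool.bool_dec (a i) (b i)) as [|Hne]; auto. exfalso.
  assert (Hp : prefx a i = prefx b i) by (apply prefx_ext; intros; apply H0; lia).
  pose proof (branch_sep d f cen rad p Hm Hc HS j a b i Hp Hne).
  pose proof (rad_dec d f cen rad p Hm HS a j (S i) m Him). lra.
Qed.

Lemma agree_close {X} (d : X -> X -> R) f cen rad p : is_metric d -> complete_metric d -> Scheme d f cen rad p ->
  forall j a b m, (forall i, (i < m)%nat -> a i = b i) -> d (pt d cen j a) (pt d cen j b) <= 2 / 2 ^ m.
Proof.
  intros Hm Hc HS j a b m H. pose proof (prefx_ext a b m H) as Hp.
  pose proof (pt_in d f cen rad p Hm Hc HS j a m).
  pose proof (pt_in d f cen rad p Hm Hc HS j b m).
  rewrite <- Hp in H1.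
  pose proof (rad_le d f cen rad p HS m j (prefx a m)).
  pose proof (d_tri d Hm (pt d cen j a) (cen m j (prefx a m)) (pt d cen j b)).
  rewrite (d_sym d Hm (pt d cen j a) (cen m j (prefx a m))) in H3.
  assert (2 / 2 ^ m = 2 * (1 / 2 ^ m)) by (unfold Rdiv; ring). lra.
Qed.

Lemma sync_pt {X} (d : X -> X -> R) f cen rad p : is_metric d -> complete_metric d -> Scheme d f cen rad p ->
  forall j j' a b n, (j <= n)%nat -> (j' <= n)%nat ->
  d (iter (p n) f (pt d cen j a)) (iter (p n) f (pt d cen j' b)) < 1 / INR (S n).
Proof.
  intros Hm Hc HS j j' a b n Hj Hj'.
  pose proof (pt_in d f cen rad p Hm Hc HS j a (S n)).
  pose proof (pt_in d f cen rad p Hm Hc HS j' b (S n)).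
  destruct HS as [HG _]. destruct (HG n) as [_ [_ [_ G4]]].
  apply (G4 j j' (prefx a (S n)) (prefx b (S n))); auto; try apply prefx_lt.
Qed.


Lemma tern_ext a b : (forall i, a i = b i) -> tern a = tern b.
Proof.
  intros H. destruct (Req_dec (tern a) (tern b)) as [|Hne]; auto. exfalso.
  assert (0 < Rabs (tern a - tern b)) by (apply Rabs_pos_lt; lra).
  destruct (small_pow 3 _ ltac:(lra) H0) as [m Hm].
  pose proof (tern_close a b m ltac:(auto)). lra.
Qed.

Definition Kset {X} (d : X -> X -> R) (cen : nat -> nat -> nat -> X) j (x : X) : Prop :=
  exists a, x = pt d cen j a.

Definition br {X} (d : X -> X -> R) (cen : nat -> nat -> nat -> X) j (x : X) : nat -> bool :=
  epsilon (inhabits (fun _ : nat => false)) (fun a => x = pt d cen j a).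

Lemma br_spec {X} (d : X -> X -> R) cen j x : Kset d cen j x -> x = pt d cen j (br d cen j x).
Proof. intros H. unfold br. apply epsilon_spec. exact H. Qed.

Lemma K_cantor {X} (d : X -> X -> R) f cen rad p : is_metric d -> complete_metric d -> Scheme d f cen rad p ->
  forall j, homeomorphic_to_cantor d (Kset d cen j).
Proof.
  intros Hm Hc HS j.
  assert (Hsame : forall a b, pt d cen j a = pt d cen j b -> forall i, a i = b i).
  { intros a b E i. apply (far_agree d f cen rad p Hm Hc HS j a b (S i)); [|lia].
    rewrite E, (d_xx d Hm). destruct HS as [_ [Hpos _]]. apply Hpos. }
  exists (fun x => tern (br d cen j x)). split; [|split; [|split; [|split]]].
  - intros x _. apply tern_cantor.
  - intros x y Hx Hy E. rewrite (br_spec d cen j x Hx), (br_spec d cen j y Hy).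
    apply (pt_ext d f cen rad p Hm Hc HS). intros i.
    apply (tern_sep _ _ (S i)); [|lia]. rewrite E, Rminus_diag, Rabs_R0. apply inv3_pos.
  - intros c Hc'. destruct (cantor_tern c Hc') as [a ->].
    exists (pt d cen j a). split. exists a; auto.
    apply tern_ext. apply Hsame. symmetry. apply br_spec. exists a; auto.
  - intros x eps Hx He. destruct (small_pow 3 eps) as [m Hm3]; try lra.
    set (a := br d cen j x). exists (rad m j (prefx a m)). split.
    destruct HS as [_ [Hpos _]]; apply Hpos.
    intros y Hy Hxy. rewrite (br_spec d cen j x Hx), (br_spec d cen j y Hy) in Hxy.
    fold a in Hxy. pose proof (far_agree d f cen rad p Hm Hc HS j a _ m Hxy) as Hag.
    pose proof (tern_close _ _ m Hag). rewrite Rabs_minus_sym in H. fold a. lra.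
  - intros x eps Hx He. destruct (small_pow 2 (eps/2)) as [m Hm2]; try lra.
    exists (1 / 3 ^ m). split. apply inv3_pos.
    intros y Hy Hg. rewrite Rabs_minus_sym in Hg.
    pose proof (tern_sep _ _ m Hg) as Hag.
    pose proof (agree_close d f cen rad p Hm Hc HS j _ _ m Hag).
    rewrite <- (br_spec d cen j x Hx), <- (br_spec d cen j y Hy) in H.
    assert (2 / 2 ^ m = 2 * (1 / 2 ^ m)) by (unfold Rdiv; ring). lra.
Qed.


Lemma idx_div j w K : (w < K)%nat -> ((j * K + w) / K = j /\ (j * K + w) mod K = w)%nat.
Proof.
  intros H. assert (K <> 0%nat) by lia. split.
  - rewrite Nat.div_add_l by auto. rewrite Nat.div_small by auto. lia.
  - rewrite Nat.add_comm, Nat.Div0.mod_add. apply Nat.mod_small; auto.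
Qed.

Lemma odd_2w w : Nat.odd (2 * w) = false.
Proof. apply Nat.odd_even. Qed.
Lemma odd_2w1 w : Nat.odd (S (2 * w)) = true.
Proof. replace (S (2 * w)) with (2 * w + 1)%nat by lia. apply Nat.odd_odd. Qed.

Lemma step_ex {X} (d : X -> X -> R) (f : X -> X) :
  is_metric d -> no_isolated_points d -> continuous_map d d f ->
  (forall k, (2 <= k)%nat -> dense_in_power d k (Prox d f k)) ->
  forall n (c : nat -> nat -> X) (r : nat -> nat -> R), (forall j w, 0 < r j w) ->
  exists (p : nat) (c' : nat -> nat -> X) (r' : nat -> nat -> R),
    (forall j w, 0 < r' j w) /\ Good d f n c r p c' r'.
Proof.
  intros Hm Hni Hf Hprox n c r Hr.
  set (K := (2 ^ n)%nat). assert (HK : (1 <= K)%nat).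
  { unfold K. pose proof (Nat.pow_le_mono_r 2 0 n ltac:(lia) ltac:(lia)). simpl in H. lia. }
  set (k := (S (S n) * K)%nat).
  destruct (fin_min k (fun i rho => rho <= r (i / K)%nat (i mod K)%nat)) as [rho [Hrho Hrho']].
  { intros; lra. }
  { intros i _. exists (r (i / K)%nat (i mod K)%nat). split; auto; lra. }
  destruct (Hprox k ltac:(unfold k; nia) (fun i => c (i / K)%nat (i mod K)%nat) (rho / 2) ltac:(lra))
    as [t [Hpt Ht]].
  set (eps := 1 / INR (S n)).
  assert (Heps : 0 < eps).
  { unfold eps. pose proof (lt_0_INR (S n) ltac:(lia)). unfold Rdiv. rewrite Rmult_1_l. apply Rinv_0_lt_compat; lra. }
  destruct (Hpt (eps / 3) ltac:(lra) 0%nat) as [p [_ Hp]].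
  assert (Hp' : forall i i', (i < k)%nat -> (i' < k)%nat -> d (iter p f (t i)) (iter p f (t i')) < eps / 3).
  { intros i i' Hi Hi'. destruct (Compare_dec.lt_eq_lt_dec i i') as [[Hlt| ->]|Hlt].
    - apply Hp; auto.
    - rewrite (d_xx d Hm). lra.
    - rewrite (d_sym d Hm). apply Hp; auto. }
  destruct (fin_min k (fun i s => forall x, d (t i) x < s -> d (iter p f (t i)) (iter p f x) < eps / 3))
    as [sg [Hsig Hsig']].
  { intros i s s' H _ Hs x Hx. apply H. lra. }
  { intros i _. destruct (iter_cont d f p Hf (t i) (eps / 3) ltac:(lra)) as [s [Hs Hs']].
    exists s. split; auto. }
  set (rho' := Rmin sg (rho / 2) / 2).
  assert (Hrho'1 : 0 < rho') by (unfold rho'; pose proof (Rmin_pos sg (rho/2) Hsig ltac:(lra)); lra).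
  assert (Hrho'2 : rho' < sg) by (unfold rho'; pose proof (Rmin_l sg (rho/2)); lra).
  assert (Hrho'3 : rho' <= rho / 4) by (unfold rho'; pose proof (Rmin_r sg (rho/2)); lra).
  set (sy := fun j w => (Nat.leb j (S n) && Nat.ltb w K)%bool).
  set (cm := fun j w => if sy j w then t (j * K + w)%nat else c j w).
  set (rm := fun j w => if sy j w then rho' else r j w).
  assert (M1 : forall j w, 0 < rm j w).
  { intros j w. unfold rm. destruct (sy j w); auto. }
  assert (M2 : forall j w, d (cm j w) (c j w) + rm j w <= r j w).
  { intros j w. unfold cm, rm. destruct (sy j w) eqn:E.
    - unfold sy in E. apply andb_prop in E. destruct E as [E1 E2].
      apply Nat.leb_le in E1. apply Nat.ltb_lt in E2.
      destruct (idx_div j w K E2) as [D1 D2].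
      assert (Hi : (j * K + w < k)%nat) by (unfold k; nia).
      specialize (Ht _ Hi). specialize (Hrho' _ Hi). rewrite D1, D2 in Ht, Hrho'. lra.
    - rewrite (d_xx d Hm). lra. }
  assert (M3 : forall j w, (j <= S n)%nat -> (w < K)%nat -> forall x, d (cm j w) x <= rm j w ->
                 d (iter p f (t (j * K + w)%nat)) (iter p f x) < eps / 3).
  { intros j w Hj Hw x Hx. unfold cm, rm in Hx.
    assert (E : sy j w = true).
    { unfold sy. apply andb_true_intro. split. apply Nat.leb_le; auto. apply Nat.ltb_lt; auto. }
    rewrite E in Hx. apply Hsig'. unfold k; nia. lra. }
  set (x0 := c 0%nat 0%nat).
  set (z := fun j w => epsilon (inhabits x0) (fun y => y <> cm j w /\ d (cm j w) y < rm j w / 2)).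
  assert (Hz : forall j w, z j w <> cm j w /\ d (cm j w) (z j w) < rm j w / 2).
  { intros j w. unfold z. apply epsilon_spec.
    destruct (Hni (cm j w) (rm j w / 2)) as [y Hy]. pose proof (M1 j w); lra. exists y; auto. }
  set (del := fun j w => d (cm j w) (z j w)).
  assert (Hdel : forall j w, 0 < del j w).
  { intros j w. unfold del. destruct (Hz j w) as [H1 _]. pose proof (d_nn d Hm (cm j w) (z j w)).
    destruct H; auto. exfalso. apply H1. symmetry. apply (d_eq d Hm). auto. }
  set (c' := fun j v => if Nat.odd v then z j (Nat.div2 v) else cm j (Nat.div2 v)).
  set (r' := fun j v => del j (Nat.div2 v) / 8).
  assert (Hc'1 : forall j v, d (c' j v) (cm j (Nat.div2 v)) <= del j (Nat.div2 v)).
  { intros j v. unfold c', del. destruct (Nat.odd v).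
    - rewrite (d_sym d Hm). lra.
    - rewrite (d_xx d Hm). left. apply (Hdel j (Nat.div2 v)). }
  assert (Hdr : forall j w, del j w < rm j w / 2) by (intros j w; apply (Hz j w)).
  exists p, c', r'. split; [|split; [|split; [|split]]].
  - intros j v. unfold r'. pose proof (Hdel j (Nat.div2 v)). lra.
  - intros j v. unfold r'. set (w := Nat.div2 v).
    pose proof (Hc'1 j v). pose proof (M2 j w). pose proof (Hdr j w).
    pose proof (d_tri d Hm (c' j v) (cm j w) (c j w)). fold w in H. pose proof (M1 j w). pose proof (Hdel j w). lra.
  - intros j v. unfold r'. set (w := Nat.div2 v).
    pose proof (M2 j w). pose proof (Hdr j w). pose proof (d_nn d Hm (cm j w) (c j w)). pose proof (Hr j w). pose proof (M1 j w). lra.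
  - intros j w. unfold r', c'. rewrite odd_2w, odd_2w1, Nat.div2_double, Nat.div2_succ_double.
    fold (del j w). pose proof (Hdel j w). lra.
  - intros j j' w w' Hj Hj' Hw Hw' x y Hx Hy.
    assert (Hw2 : forall u, (u < 2 ^ S n)%nat -> (Nat.div2 u < K)%nat).
    { intros u Hu. pose proof (Nat.div2_odd u). rewrite Nat.pow_succ_r' in Hu. fold K in Hu.
      destruct (Nat.odd u); simpl in H; lia. }
    assert (Hball : forall j w x, d (c' j w) x <= r' j w -> d (cm j (Nat.div2 w)) x <= rm j (Nat.div2 w)).
    { intros j0 w0 x1 H1. unfold r' in H1. pose proof (Hc'1 j0 w0). pose proof (Hdr j0 (Nat.div2 w0)).
      pose proof (d_tri d Hm (cm j0 (Nat.div2 w0)) (c' j0 w0) x1).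
      rewrite (d_sym d Hm (cm j0 (Nat.div2 w0)) (c' j0 w0)) in H2. pose proof (Hdel j0 (Nat.div2 w0)). lra. }
    pose proof (M3 j (Nat.div2 w) Hj (Hw2 w Hw) x (Hball j w x Hx)) as A1.
    pose proof (M3 j' (Nat.div2 w') Hj' (Hw2 w' Hw') y (Hball j' w' y Hy)) as A2.
    pose proof (Hp' (j * K + Nat.div2 w)%nat (j' * K + Nat.div2 w')%nat
                  ltac:(pose proof (Hw2 w Hw); unfold k; nia) ltac:(pose proof (Hw2 w' Hw'); unfold k; nia)) as A3.
    pose proof (d_tri d Hm (iter p f x) (iter p f (t (j * K + Nat.div2 w)%nat)) (iter p f y)) as T1.
    pose proof (d_tri d Hm (iter p f (t (j * K + Nat.div2 w)%nat)) (iter p f (t (j' * K + Nat.div2 w')%nat)) (iter p f y)) as T2.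
    rewrite (d_sym d Hm (iter p f x) (iter p f (t (j * K + Nat.div2 w)%nat))) in T1. fold eps. lra.
Qed.


Definition Trip X := (nat * ((nat -> nat -> X) * (nat -> nat -> R)))%type.
Definition StT X := {cr : (nat -> nat -> X) * (nat -> nat -> R) | forall j w, 0 < snd cr j w}.
Definition StepHyp {X} (d : X -> X -> R) (f : X -> X) : Prop :=
  forall n (c : nat -> nat -> X) (r : nat -> nat -> R), (forall j w, 0 < r j w) ->
  exists q : Trip X, (forall j w, 0 < snd (snd q) j w) /\ Good d f n c r (fst q) (fst (snd q)) (snd (snd q)).

Lemma step_ex3 {X} (d : X -> X -> R) (f : X -> X) :
  is_metric d -> no_isolated_points d -> continuous_map d d f ->
  (forall k, (2 <= k)%nat -> dense_in_power d k (Prox d f k)) -> StepHyp d f.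
Proof.
  intros Hm Hni Hf Hp n c r Hr. destruct (step_ex d f Hm Hni Hf Hp n c r Hr) as [p [c' [r' [H1 H2]]]].
  exists (p, (c', r')). simpl. auto.
Qed.

Definition stepT {X} (d : X -> X -> R) f (Hs : StepHyp d f) (n : nat) (s : StT X) :
  {q : Trip X | (forall j w, 0 < snd (snd q) j w) /\
     Good d f n (fst (proj1_sig s)) (snd (proj1_sig s)) (fst q) (fst (snd q)) (snd (snd q))} :=
  constructive_indefinite_description _ (Hs n _ _ (proj2_sig s)).

Fixpoint seqS {X} (d : X -> X -> R) f (Hs : StepHyp d f) (init : StT X) (n : nat) : StT X :=
  match n with
  | O => init
  | S m => let q := stepT d f Hs m (seqS d f Hs init m) in
           exist _ (snd (proj1_sig q)) (proj1 (proj2_sig q))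
  end.

Lemma seq_scheme {X} (d : X -> X -> R) f (Hs : StepHyp d f) (init : StT X) :
  (forall j w, snd (proj1_sig init) j w <= 1) ->
  Scheme d f (fun n => fst (proj1_sig (seqS d f Hs init n))) (fun n => snd (proj1_sig (seqS d f Hs init n)))
    (fun n => fst (proj1_sig (stepT d f Hs n (seqS d f Hs init n)))).
Proof.
  intros H1. split; [|split].
  - intros n. exact (proj2 (proj2_sig (stepT d f Hs n (seqS d f Hs init n)))).
  - intros n. exact (proj2_sig (seqS d f Hs init n)).
  - exact H1.
Qed.

Lemma fin_max_nat (k : nat) (P : nat -> nat -> Prop) :
  (forall i n n', P i n -> (n <= n')%nat -> P i n') ->
  (forall i, (i < k)%nat -> exists N, P i N) -> exists N, forall i, (i < k)%nat -> P i N.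
Proof.
  intros Hm. induction k; intros H.
  - exists 0%nat. intros; lia.
  - destruct IHk as [N1 H1]. intros; apply H; lia.
    destruct (H k ltac:(lia)) as [N2 H2]. exists (max N1 N2).
    intros i Hi. destruct (Nat.eq_dec i k) as [ ->|Hne].
    + apply (Hm k N2); auto; lia.
    + apply (Hm i N1); [apply H1; lia | lia].
Qed.

Lemma inv_small eps : 0 < eps -> exists N, 1 / INR (S N) < eps.
Proof.
  intros He. destruct (INR_unbounded (/ eps)) as [N HN]. exists N.
  assert (0 < / eps) by (apply Rinv_0_lt_compat; lra).
  rewrite S_INR. assert (0 < INR N + 1) by lra.
  apply (Rmult_lt_reg_r (INR N + 1)); auto. unfold Rdiv. rewrite Rmult_1_l, Rinv_l by lra.
  apply (Rmult_lt_reg_l (/eps)); auto. rewrite <- Rmult_assoc, Rinv_l by lra. lra.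
Qed.

Lemma inv_mono n m : (n <= m)%nat -> 1 / INR (S m) <= 1 / INR (S n).
Proof.
  intros H. unfold Rdiv. rewrite !Rmult_1_l. apply Rinv_le_contravar.
  apply lt_0_INR; lia. apply le_INR; lia.
Qed.


Lemma dir1 (X : Type) (d : X -> X -> R)
  (Hmetric : is_metric d) (Hcomplete : complete_metric d)
  (Hsep : separable_metric d) (Hnoiso : no_isolated_points d)
  (f : X -> X) (Hf : continuous_map d d f) :
  (forall k, (2 <= k)%nat -> dense_in_power d k (Prox d f k)) ->
  (exists (p : nat -> nat) (S : X -> Prop),
     sigma_cantor d S /\ dense_in d S /\
     forall x y, S x -> S y ->
       forall eps, 0 < eps -> exists N, forall n, (N <= n)%nat ->
         d (iter (p n) f x) (iter (p n) f y) < eps).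
Proof.
  intros Hprox.
  destruct (classic (inhabited X)) as [[x0]|Hne].
  2:{ exists (fun _ => 0%nat), (fun _ => False). split; [|split].
      - exists (fun _ _ => False), (fun _ => False). split. intros _ []. intros x; exfalso; apply Hne; constructor; auto.
      - intros x; exfalso; apply Hne; constructor; auto.
      - intros x; exfalso; apply Hne; constructor; auto. }
  destruct Hsep as [Dn [[h Hh] HD]].
  set (e := fun m => epsilon (inhabits x0) (fun x => Dn x /\ h x = m)).
  set (q := fun j => e (fst (of_nat j))).
  set (rho0 := fun j => 1 / (INR (snd (of_nat j)) + 2)).
  assert (Hrho0 : forall j, 0 < rho0 j /\ rho0 j <= 1).
  { intros j. unfold rho0. pose proof (pos_INR (snd (of_nat j))).
    split. unfold Rdiv; rewrite Rmult_1_l; apply Rinv_0_lt_compat; lra.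
    unfold Rdiv; rewrite Rmult_1_l. rewrite <- Rinv_1. apply Rinv_le_contravar; lra. }
  set (init := exist (fun cr : (nat -> nat -> X) * (nat -> nat -> R) => forall j w, 0 < snd cr j w)
                 (fun j (_ : nat) => q j, fun j (_ : nat) => rho0 j) (fun j _ => proj1 (Hrho0 j)) : StT X).
  pose proof (step_ex3 d f Hmetric Hnoiso Hf Hprox) as Hs.
  set (cen := fun n => fst (proj1_sig (seqS d f Hs init n))).
  set (rad := fun n => snd (proj1_sig (seqS d f Hs init n))).
  set (p := fun n => fst (proj1_sig (stepT d f Hs n (seqS d f Hs init n)))).
  assert (HS : Scheme d f cen rad p).
  { apply seq_scheme. intros j w. simpl. apply Hrho0. }
  exists p, (fun x => exists j, Kset d cen j x). split; [|split].
  - exists (Kset d cen), (fun _ => True). split.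
    + intros n _. apply (K_cantor d f cen rad p Hmetric Hcomplete HS).
    + intros x. split. intros [j Hj]. exists j; auto. intros [j [_ Hj]]. exists j; auto.
  - intros x eps He. destruct (HD x (eps / 2) ltac:(lra)) as [y [Hy Hxy]].
    destruct (inv_small (eps / 2) ltac:(lra)) as [b Hb].
    set (j := to_nat (h y, b)).
    assert (Hq : q j = y).
    { unfold q, j. rewrite cancel_of_to. simpl. unfold e.
      assert (Hsp : Dn (epsilon (inhabits x0) (fun x => Dn x /\ h x = h y)) /\
                    h (epsilon (inhabits x0) (fun x => Dn x /\ h x = h y)) = h y).
      { apply epsilon_spec. exists y; auto. }
      apply Hh; tauto. }
    assert (Hr : rho0 j <= 1 / INR (S b)).
    { unfold rho0, j. rewrite cancel_of_to. simpl snd. rewrite S_INR.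
      unfold Rdiv; rewrite !Rmult_1_l. pose proof (pos_INR b).
      apply Rinv_le_contravar; lra. }
    exists (pt d cen j (fun _ => false)). split. exists j, (fun _ => false). reflexivity.
    pose proof (pt_in d f cen rad p Hmetric Hcomplete HS j (fun _ => false) 0%nat) as Hin.
    assert (E1 : cen 0%nat j (prefx (fun _ => false) 0%nat) = q j) by reflexivity.
    assert (E2 : rad 0%nat j (prefx (fun _ => false) 0%nat) = rho0 j) by reflexivity.
    rewrite E1, E2, Hq in Hin.
    pose proof (d_tri d Hmetric x y (pt d cen j (fun _ => false))). lra.
  - intros x y [j [a ->]] [j' [b ->]] eps He.
    destruct (inv_small eps He) as [N0 HN0].
    exists (N0 + j + j')%nat. intros n Hn.
    pose proof (sync_pt d f cen rad p Hmetric Hcomplete HS j j' a b n ltac:(lia) ltac:(lia)).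
    pose proof (inv_mono N0 n ltac:(lia)). lra.
Qed.

Lemma dir2 (X : Type) (d : X -> X -> R)
  (Hmetric : is_metric d) (f : X -> X) :
  (exists (p : nat -> nat) (S : X -> Prop),
     sigma_cantor d S /\ dense_in d S /\
     forall x y, S x -> S y ->
       forall eps, 0 < eps -> exists N, forall n, (N <= n)%nat ->
         d (iter (p n) f x) (iter (p n) f y) < eps) ->
  (forall k, (2 <= k)%nat -> dense_in_power d k (Prox d f k)).
Proof.
  intros [p [S [_ [HD Hc]]]] k Hk y eps He.
  set (t := fun i => epsilon (inhabits (y 0%nat)) (fun s => S s /\ d (y i) s < eps)).
  assert (Ht : forall i, S (t i) /\ d (y i) (t i) < eps).
  { intros i. unfold t. apply epsilon_spec. apply HD; auto. }
  exists t. split.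
  2:{ intros i _. rewrite (d_sym d Hmetric). apply Ht. }
  assert (Hall : forall e, 0 < e -> exists M, forall i, (i < k)%nat -> forall m, (M <= m)%nat ->
            forall j, (j < k)%nat -> d (iter (p m) f (t i)) (iter (p m) f (t j)) < e).
  { intros e He'. apply (fin_max_nat k (fun i M => forall m, (M <= m)%nat ->
            forall j, (j < k)%nat -> d (iter (p m) f (t i)) (iter (p m) f (t j)) < e)).
    { intros i n n' H Hn m Hm j Hj. apply H; auto; lia. }
    intros i Hi.
    destruct (fin_max_nat k (fun j M => forall m, (M <= m)%nat -> d (iter (p m) f (t i)) (iter (p m) f (t j)) < e))
      as [M HM].
    { intros j n n' H Hn m Hm. apply H; lia. }
    { intros j Hj. apply (Hc _ _ (proj1 (Ht i)) (proj1 (Ht j)) e He'). }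
    exists M. intros m Hm j Hj. apply HM; auto. }
  intros eps' He' N.
  set (Z := fun qq => forall i j, (i < j)%nat -> (j < k)%nat -> iter qq f (t i) = iter qq f (t j)).
  destruct (fin_min N (fun qq del => Z qq \/ exists i j, (i < j)%nat /\ (j < k)%nat /\ del <= d (iter qq f (t i)) (iter qq f (t j))))
    as [del [Hdel Hdel']].
  { intros i r r' [H|[a [b [H1 [H2 H3]]]]] _ Hr. left; auto. right. exists a, b. repeat split; auto. lra. }
  { intros qq _. destruct (classic (exists i j, (i < j)%nat /\ (j < k)%nat /\ iter qq f (t i) <> iter qq f (t j))) as [[i [j [H1 [H2 H3]]]]|Hn].
    - exists (d (iter qq f (t i)) (iter qq f (t j))). split.
      + destruct (d_nn d Hmetric (iter qq f (t i)) (iter qq f (t j))); auto.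
        exfalso. apply H3. apply (d_eq d Hmetric). auto.
      + right. exists i, j. repeat split; auto. lra.
    - exists 1. split. lra. left. intros i j H1 H2. apply NNPP. intros H3. apply Hn. exists i, j. auto. }
  destruct (Hall (Rmin eps' del) (Rmin_pos _ _ He' Hdel)) as [M HM].
  pose proof (Rmin_l eps' del). pose proof (Rmin_r eps' del).
  destruct (Compare_dec.le_lt_dec N (p M)) as [HN|HN].
  - exists (p M). split; auto. intros i j Hij Hj.
    pose proof (HM i ltac:(lia) M (le_n M) j Hj). lra.
  - destruct (Hdel' (p M) HN) as [HZ|[i [j [H1 [H2 H3]]]]].
    + exists N. split; auto. intros i j Hij Hj.
      replace N with ((N - p M) + p M)%nat by lia. rewrite !iter_add.
      rewrite (HZ i j Hij Hj), (d_xx d Hmetric). lra.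
    + exfalso. pose proof (HM i ltac:(lia) M (le_n M) j H2). lra.
Qed.

Theorem corollary2p4 (X : Type) (d : X -> X -> R)
  (Hmetric : is_metric d) (Hcomplete : complete_metric d)
  (Hsep : separable_metric d) (Hnoiso : no_isolated_points d)
  (f : X -> X) (Hf : continuous_map d d f) :
  (forall k, (2 <= k)%nat -> dense_in_power d k (Prox d f k))
  <->
  (exists (p : nat -> nat) (S : X -> Prop),
     sigma_cantor d S /\ dense_in d S /\
     forall x y, S x -> S y ->
       forall eps, 0 < eps -> exists N, forall n, (N <= n)%nat ->
         d (iter (p n) f x) (iter (p n) f y) < eps).
Proof.
  split.
  - apply dir1; auto.
  - apply dir2; auto.
Qed.
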